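(* Let $p\ge0$. There is a constant $C_p<\infty$ such that for all $0\le a<b$ and all $u\in H^1(a,b)$ with $u(b)=0$, $$\int_a^b\Big(\frac{u(x)}{b-x}\Big)^2x^p\,dx\le C_p\int_a^b (u'(x))^2x^p\,dx.$$
   Context: $C_p$ depends only on $p$, not on $a$, $b$ or $u$. *)

(* Defs.v *)
From HB Require Import structures.
From mathcomp Require Import all_boot all_order all_algebra.
From mathcomp Require Import all_classical all_reals all_analysis.
Set Implicit Arguments. Unset Strict Implicit. Unset Printing Implicit Defensive.
Import Order.TTheory GRing.Theory Num.Theory.
Local Open Scope ring_scope.
Local Open Scope classical_set_scope.

(* H^1(a,b) in one dimension: u is (a representative of) an H^1 function on
   [a,b] with weak derivative g iff g is in L^2(a,b) and
   u x = u a + \int_a^x g  for every x in [a,b]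
   (the absolutely continuous representative; g = u' a.e.). *)
Definition H1_with_deriv (R : realType) (a b : R) (u g : R -> R) : Prop :=
  measurable_fun `[a, b] g /\
  (@lebesgue_measure R).-integrable `[a, b] (fun x => (g x ^+ 2)%:E) /\
  (forall x, a <= x <= b ->
     u x = u a + Rintegral (@lebesgue_measure R) `[a, x] g).

(* Main.v *)
Require Import Defs.
From HB Require Import structures.
From mathcomp Require Import all_boot all_order all_algebra.
From mathcomp Require Import all_classical all_reals all_analysis.
From mathcomp Require Import ring lra measurable_realfun.
Import Order.TTheory GRing.Theory Num.Theory.
Local Open Scope ring_scope.
Local Open Scope classical_set_scope.
Notation EMR R := (measurable_realfun.constructive_ereal_extended__canonical__measurable_structure_SigmaRing R).
Section S.
Context (R : realType).
Notation mu := (@lebesgue_measure R).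
Local Open Scope ereal_scope.

Lemma le_integral_nm d (T : measurableType d) (m : {measure set T -> \bar R})
  (D : set T) (f1 f2 : T -> \bar R) :
  (forall x, D x -> 0 <= f1 x) -> (forall x, D x -> f1 x <= f2 x) ->
  \int[m]_(x in D) f1 x <= \int[m]_(x in D) f2 x.
Proof.
move=> f10 f12.
have f20 : forall x, D x -> 0 <= f2 x by move=> x Dx; exact: le_trans (f10 x Dx) (f12 x Dx).
rewrite (ge0_integralE _ f10) (ge0_integralE _ f20).
apply: ereal_sup_le => _ [h hf <-]; exists h => //= x.
apply: le_trans (hf x) _; rewrite /patch; case: ifP => // /set_mem; exact: f12.
Qed.
End S.
Section S2.
Context (R : realType).
Notation mu := (@lebesgue_measure R).

Lemma der_powRB (e r y : R) : y < e ->
  is_derive y 1 (fun y => (e - y) `^ r) (- (r * (e - y) `^ (r - 1))).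
Proof.
move=> ye.
have hf : is_derive y (1:R) (fun y => e - y) (0 - 1) by apply: is_deriveB.
have hg : is_derive (e - y) (1:R) (@powR R ^~ r) (r * (e - y) `^ (r - 1)).
  by apply: is_derive1_powR; rewrite subr_gt0.
have df : derivable (fun y => e - y) y 1 by case: hf.
have dg : derivable (@powR R ^~ r) (e - y) 1 by case: hg.
have dc : derivable ((@powR R ^~ r) \o (fun y => e - y)) y 1.
  apply/derivable1_diffP; apply: differentiable_comp; exact/derivable1_diffP.
apply: DeriveDef => //.
rewrite -derive1E (derive1_comp df dg) !derive1E.
have -> : 'D_1 (fun y => e - y) y = 0 - 1 by case: hf.
have -> : 'D_1 (@powR R ^~ r) (e - y) = r * (e - y) `^ (r - 1) by case: hg.
by rewrite sub0r mulrN1.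
Qed.
End S2.
Section S3.
Context (R : realType).
Notation mu := (@lebesgue_measure R).

Lemma int_powR (e q a b : R) : a < b -> b < e -> q + 1 != 0 ->
  (\int[mu]_(y in `[a, b]) ((e - y) `^ q)%:E =
   ((((e - a) `^ (q+1) - (e - b) `^ (q+1)) / (q+1))%:E))%E.
Proof.
move=> ab be q1.
pose F y := (- (q+1)^-1) * (e - y) `^ (q+1).
have dF y : y < e -> is_derive y (1:R) F ((e - y) `^ q).
  move=> ye; have h := @der_powRB R e (q + 1) y ye.
  have h2 := @is_deriveZ _ _ _ (fun y => (e - y) `^ (q+1)) (- (q+1)^-1) y 1 _ h.
  apply: is_derive_eq h2 _.
  rewrite /GRing.scale/= mulrN mulNr opprK mulrA mulVf // mul1r.
  by rewrite addrK.
have dFd y : y < e -> derivable F y 1 by move=> /dF [].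
have cF y : y < e -> {for y, continuous F}.
  by move=> ye; apply/differentiable_continuous/derivable1_diffP/dFd.
have cf y : y < e -> {for y, continuous (fun y => (e - y) `^ q)}.
  move=> ye; apply/differentiable_continuous/derivable1_diffP.
  by case: (@der_powRB R e q y ye).
have -> : (((e - a) `^ (q+1) - (e - b) `^ (q+1)) / (q+1)) = F b - F a.
  by rewrite /F; field.
apply: continuous_FTC2 => //.
- apply: derivable_within_continuous => y; rewrite in_itv/= => /andP[_ yb].
  by case: (@der_powRB R e q y (le_lt_trans yb be)).
- split.
  + by move=> y; rewrite in_itv/= => /andP[_ yb]; apply: dFd; exact: lt_trans yb be.
  + by apply: cvg_at_right_filter; apply: cF; exact: lt_trans ab be.
  + by apply: cvg_at_left_filter; apply: cF.
- move=> y; rewrite in_itv/= => /andP[_ yb].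
  by rewrite derive1E; case: (dF y (lt_trans yb be)).
Qed.
End S3.
Section S4.
Context (R : realType).
Lemma lam_bound (Y A B : R) : 0 <= Y -> 0 <= A -> 0 < B ->
  (forall l, 0 < l -> Y <= l * A + B / l) -> Y ^+ 2 <= 4 * A * B.
Proof.
move=> Y0 A0 B0 H.
have [Ye0|Ypos] := eqVneq Y 0; first by rewrite Ye0 expr0n /=; apply: mulr_ge0; [apply: mulr_ge0 => //|exact: ltW].
have two0 : (0:R) < 2 by lra.
have Yp : 0 < Y by rewrite lt_def Ypos Y0.
have [Ae0|Apos] := eqVneq A 0.
  have := H (2 * B / Y) (divr_gt0 (mulr_gt0 two0 B0) Yp).
  have e : B / (2 * B / Y) = Y / 2 by field; rewrite ?gt_eqF.
  rewrite Ae0 mulr0 add0r e => h; exfalso; lra.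
have Ap : 0 < A by rewrite lt_def Apos A0.
have := H (Y / (2 * A)) (divr_gt0 Yp (mulr_gt0 two0 Ap)).
rewrite invf_div => h.
have e1 : Y / (2 * A) * A = Y / 2 by field; rewrite gt_eqF.
have e2 : B * (2 * A / Y) = 2 * A * B / Y by field; rewrite gt_eqF.
rewrite e1 e2 in h.
have et : 2 * A * B / Y * Y = 2 * A * B by field; rewrite gt_eqF.
move: h et; set t := 2 * A * B / Y => h et.
rewrite expr2; nra.
Qed.
End S4.
Section S6.
Context (R : realType).

Lemma sqrt_add_le (u v : R) : 0 <= u -> 0 <= v ->
  Num.sqrt (u + v) <= Num.sqrt u + Num.sqrt v.
Proof.
move=> u0 v0.
have su := sqrtr_ge0 u; have sv := sqrtr_ge0 v.
rewrite -(ger0_norm (addr_ge0 su sv)) -sqrtr_sqr ler_sqrt; last by apply: sqr_ge0.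
rewrite sqrrD !sqr_sqrtr //.
have : 0 <= Num.sqrt u * Num.sqrt v *+ 2 by apply: mulrn_wge0; apply: mulr_ge0.
lra.
Qed.

Lemma KW_bound (d t L : R) : 0 < d -> 0 <= t -> 0 < L ->
  2 * d `^ (- 3 / 2) * Num.sqrt (t + d ^+ 2 / L) <=
  2 * Num.sqrt t * d `^ (- 3 / 2) + 2 / Num.sqrt L * d `^ (- 3 / 2 + 1).
Proof.
move=> d0 t0 L0.
have sL : 0 < Num.sqrt L by rewrite sqrtr_gt0.
have e : Num.sqrt (d ^+ 2 / L) = d / Num.sqrt L.
  by rewrite sqrtrM ?sqr_ge0 // sqrtr_sqr ger0_norm ?ltW // sqrtrV ?ltW.
have hp : 0 <= d `^ (- 3 / 2) by apply: powR_ge0.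
rewrite powRD; last by rewrite (gt_eqF d0) implybT.
rewrite (powRr1 (ltW d0)).
have := @sqrt_add_le t (d ^+ 2 / L) t0 (divr_ge0 (sqr_ge0 d) (ltW L0)).
rewrite e => h.
rewrite [X in _ <= X](_ : _ = 2 * (d `^ (- 3 / 2) * (Num.sqrt t + d / Num.sqrt L))); last first.
  by field; rewrite gt_eqF.
rewrite -mulrA; apply: ler_wpM2l => //; exact: ler_wpM2l.
Qed.

Lemma num8 (L t : R) : 0 < t -> 0 < L ->
  2 * Num.sqrt t * ((L `^ (- 3 / 2 + 1) - t `^ (- 3 / 2 + 1)) / (- 3 / 2 + 1)) +
  2 / Num.sqrt L * ((L `^ (- 3 / 2 + 1 + 1) - t `^ (- 3 / 2 + 1 + 1)) / (- 3 / 2 + 1 + 1))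
  <= 8.
Proof.
move=> t0 L0.
have e1 : (- 3 / 2 + 1 : R) = - 2^-1 by field.
have e2 : (- 3 / 2 + 1 + 1 : R) = 2^-1 by field.
rewrite e2 e1 !powRN !powR12_sqrt; [|exact: ltW|exact: ltW].
have st : 0 < Num.sqrt t by rewrite sqrtr_gt0.
have sL : 0 < Num.sqrt L by rewrite sqrtr_gt0.
set a := Num.sqrt t; set c := Num.sqrt L.
have -> : 2 * a * ((c^-1 - a^-1) / - 2^-1) + 2 / c * ((c - a) / 2^-1) = 8 - 8 * (a / c).
  by field; rewrite !gt_eqF.
have : 0 <= a / c by apply: divr_ge0; apply: ltW.
lra.
Qed.
End S6.
Section S7.
Context (R : realType).

Lemma amgm (c y : R) : 0 < c -> 2 * y <= c * y ^+ 2 + c^-1.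
Proof.
move=> c0.
have h : 0 <= (c * y - 1) ^+ 2 / c by apply: divr_ge0; [exact: sqr_ge0|exact: ltW].
have -> : c * y ^+ 2 + c^-1 = 2 * y + (c * y - 1) ^+ 2 / c by field; rewrite gt_eqF.
lra.
Qed.

Lemma pow32 (d : R) : 0 < d -> d `^ (- 3 / 2) = Num.sqrt d / d ^+ 2.
Proof.
move=> d0.
have -> : (- 3 / 2 : R) = 2^-1 - 2%:R by field.
rewrite powRB; last by rewrite (gt_eqF d0) implybT.
by rewrite powR12_sqrt ?(ltW d0) // powR_mulrn ?(ltW d0).
Qed.
End S7.
Section S8.
Context (R : realType).
Notation mu := (@lebesgue_measure R).

Lemma step1_lemma (p a b x : R) (u g : R -> R) :
  0 <= p -> 0 <= a -> a <= x -> x < b ->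
  measurable_fun `[a, b] g -> mu.-integrable `[a, b] (EFin \o g) ->
  (forall y, a <= y <= b -> u y = u a + \int[mu]_(t in `[a, y]) g t) -> u b = 0 ->
  (((u x / (b - x)) ^+ 2 * x `^ p)%:E <=
   (2 * (b - x) `^ (- 3 / 2))%:E *
   \int[mu]_(s in `]x, b[) (g s ^+ 2 * s `^ p * Num.sqrt (b - s + (b - x) ^+ 2 / (b - a)))%:E)%E.
Proof.
move=> hp a0 ax xb mg ig uH ub.
have ab : a < b by exact: le_lt_trans ax xb.
set d := b - x; have d0 : 0 < d by rewrite subr_gt0.
set L := b - a; have L0 : 0 < L by rewrite subr_gt0.
set del := d ^+ 2 / L; have del0 : 0 < del by rewrite divr_gt0 // exprn_gt0.
have x0 : 0 <= x by exact: le_trans a0 ax.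
have sD : `]x, b[ `<=` `[a, b].
  by apply: subset_itv; rewrite bnd_simp.
have mgD : measurable_fun `]x, b[ g by exact: measurable_funS mg.
have sD2 : `]x, b] `<=` `[a, b].
  by apply: subset_itv; rewrite bnd_simp.
have igD2 : mu.-integrable `]x, b] (EFin \o g) by exact: integrableS ig.
have ubnd : `|u x| <= \int[mu]_(t in `]x, b]) `|g t|.
  have ux := uH x; rewrite ax (ltW xb) in ux; have {}ux := ux isT.
  have ub' := uH b; rewrite (ltW ab) lexx ub in ub'; have {}ub' := ub' isT.
  have e : u x = - \int[mu]_(t in `]x, b]) g t.
    rewrite -(@Rintegral_itvB _ g (BLeft a) (BRight b) x ig); first last.
    - by rewrite bnd_simp ltW.
    - by rewrite bnd_simp.
    rewrite ux; lra.
  rewrite e normrN; exact: le_normr_Rintegral.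
have E1 : ((\int[mu]_(t in `]x, b]) `|g t|)%:E = \int[mu]_(t in `]x, b[) (`|g t|)%:E)%E.
  rewrite fineK; last first.
    apply: integrable_fin_num => //; exact: (integrable_norm igD2).
  rewrite (@integral_itv_bndoo _ x b _ false false) //.
  by apply/measurable_EFinP; apply: measurableT_comp => //.
set M := Num.sqrt (x `^ p).
have M0 : 0 <= M by exact: sqrtr_ge0.
pose P s := (b + del - s) `^ (- 2^-1).
have mP : measurable_fun (U := EMR R) `]x, b[ (fun s => (P s)%:E).
  apply/measurable_EFinP; apply: measurable_funTS.
  rewrite (_ : P = (@powR R ^~ (- 2^-1)) \o (fun s => b + del - s)) //.
  apply: measurableT_comp; first exact: measurable_powR.
  exact: measurable_funB.
have IB : (\int[mu]_(s in `]x, b[) (P s)%:E <= (2 * Num.sqrt d)%:E)%E.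
  rewrite -(@integral_itv_bndoo _ x b _ true false) //.
  have bd : b < b + del by rewrite ltrDl.
  have q1 : (- 2^-1 + 1 : R) != 0 by apply/eqP; lra.
  rewrite (@int_powR R (b + del) (- 2^-1) x b xb bd q1).
  have -> : (- 2^-1 + 1 : R) = 2^-1 by field.
  have -> : b + del - x = d + del by rewrite /d; ring.
  have -> : b + del - b = del by ring.
  rewrite !powR12_sqrt; [|exact: ltW|exact: addr_ge0 (ltW d0) (ltW del0)].
  rewrite lee_fin.
  have := @sqrt_add_le R d del (ltW d0) (ltW del0).
  have : 0 <= Num.sqrt del by exact: sqrtr_ge0.
  have -> : (Num.sqrt (d + del) - Num.sqrt del) / 2^-1 = 2 * (Num.sqrt (d + del) - Num.sqrt del) by field.
  lra.
set A := (\int[mu]_(s in `]x, b[) (g s ^+ 2 * s `^ p * Num.sqrt (b - s + del))%:E)%E.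
have mA : measurable_fun (U := EMR R) `]x, b[ (fun s => (g s ^+ 2 * s `^ p * Num.sqrt (b - s + del))%:E).
  apply/measurable_EFinP; apply: measurable_funM; first apply: measurable_funM.
  - exact: measurable_funX.
  - exact: measurable_funTS (measurable_powR p).
  - apply: measurable_funTS.
    apply: (measurableT_comp (continuous_measurable_fun (@sqrt_continuous R))).
    by apply: measurable_funD => //; exact: measurable_funB.
have A0 : (0 <= A)%E.
  apply: integral_ge0 => s _; rewrite lee_fin; apply: mulr_ge0; last exact: sqrtr_ge0.
  by apply: mulr_ge0; [exact: sqr_ge0|exact: powR_ge0].
have key : forall l, 0 < l ->
    ((2 * M * `|u x|)%:E <= l%:E * A + (l^-1 * (2 * Num.sqrt d))%:E)%E.
  move=> l l0.
  apply: (@le_trans _ _ ((2 * M)%:E * \int[mu]_(t in `]x, b[) (`|g t|)%:E)%E).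
    rewrite -E1 -EFinM lee_fin; apply: ler_wpM2l => //.
    by apply: mulr_ge0.
  rewrite -ge0_integralZl_EFin //; [|by apply/measurable_EFinP; apply: measurableT_comp|by apply: mulr_ge0].
  apply: (@le_trans _ _ (\int[mu]_(s in `]x, b[)
      (l * (g s ^+ 2 * s `^ p * Num.sqrt (b - s + del)) + l^-1 * P s)%:E)%E).
    apply: le_integral_nm => s Ds.
      by rewrite lee_fin; apply: mulr_ge0 => //; apply: mulr_ge0.
    move: Ds => /=; rewrite in_itv /= => /andP[xs sb].
    have w0 : 0 < Num.sqrt (b - s + del).
      by rewrite sqrtr_gt0; apply: addr_gt0 => //; rewrite subr_gt0.
    have Pe : P s = (Num.sqrt (b - s + del))^-1.
      rewrite /P (_ : b + del - s = b - s + del); last by ring.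
      rewrite powRN powR12_sqrt //; apply: addr_ge0; last exact: ltW.
      by rewrite subr_ge0 ltW.
    rewrite Pe lee_fin.
    set w := Num.sqrt (b - s + del).
    set m := Num.sqrt (s `^ p).
    have Mm : M <= m.
      rewrite ler_sqrt; last exact: powR_ge0.
      by apply: ge0_ler_powR => //; rewrite ?nnegrE //; [exact: le_trans x0 (ltW xs)|exact: ltW].
    have h := @amgm R (l * w) (m * `|g s|) (mulr_gt0 l0 w0).
    have e2 : (m * `|g s|) ^+ 2 = g s ^+ 2 * s `^ p.
      by rewrite exprMn sqr_sqrtr ?powR_ge0 // real_normK ?num_real // mulrC.
    rewrite e2 in h.
    have e3 : l * w * (g s ^+ 2 * s `^ p) + (l * w)^-1 = l * (g s ^+ 2 * s `^ p * w) + l^-1 * w^-1.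
      by rewrite invfM; ring.
    rewrite -e3; apply: le_trans h.
    rewrite -mulrA; apply: ler_wpM2l => //; apply: ler_wpM2r => //.
  under eq_integral do rewrite EFinD.
  have G0 s : 0 <= g s ^+ 2 * s `^ p * Num.sqrt (b - s + del).
    by apply: mulr_ge0; [apply: mulr_ge0; [exact: sqr_ge0|exact: powR_ge0]|exact: sqrtr_ge0].
  rewrite ge0_integralD //; last 4 first.
  - by move=> s _; rewrite lee_fin; apply: mulr_ge0 => //; exact: ltW.
  - by apply/measurable_EFinP; apply: measurable_funM => //; apply/measurable_EFinP.
  - by move=> s _; rewrite lee_fin; apply: mulr_ge0; [rewrite invr_ge0 ltW|exact: powR_ge0].
  - by apply/measurable_EFinP; apply: measurable_funM => //; apply/measurable_EFinP.
  under eq_integral do rewrite EFinM.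
  rewrite ge0_integralZl_EFin //; try exact: ltW; try exact: mA; try (by move=> s _; rewrite lee_fin).
  under [X in (_ + X)%E]eq_integral do rewrite EFinM.
  rewrite ge0_integralZl_EFin //; try exact: mP; try (by rewrite invr_ge0 ltW); try (by move=> s _; rewrite lee_fin; exact: powR_ge0).
  apply: leeD => //.
  rewrite EFinM; apply: lee_wpmul2l => //.
  by rewrite lee_fin invr_ge0 ltW.
have K0 : 0 < 2 * d `^ (- 3 / 2) by apply: mulr_gt0 => //; exact: powR_gt0.
have [Afin|Aoo] : A \is a fin_num \/ A = +oo%E.
  move: A0; case: (A) => [r||] //= _; first by left.
  by right.
  2: by rewrite Aoo gt0_muley ?lte_fin // leey.
set r := fine A.
have Ar : A = r%:E by rewrite fineK.
have r0 : 0 <= r by rewrite -lee_fin -Ar.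
have hk l : 0 < l -> 2 * M * `|u x| <= l * r + (2 * Num.sqrt d) / l.
  move=> l0; have := key l l0; rewrite Ar -EFinM -EFinD lee_fin => h.
  by apply: le_trans h _; rewrite (mulrC l^-1).
have sd : 0 < Num.sqrt d by rewrite sqrtr_gt0.
have hY := @lam_bound R (2 * M * `|u x|) r (2 * Num.sqrt d) (mulr_ge0 (mulr_ge0 (ler0n _ 2) M0) (normr_ge0 _)) r0 (mulr_gt0 (ltr0n _ 2) sd) hk.
have Mx : M ^+ 2 = x `^ p by rewrite sqr_sqrtr // powR_ge0.
have hY' : x `^ p * u x ^+ 2 <= 2 * r * Num.sqrt d.
  move: hY; rewrite !exprMn Mx real_normK ?num_real //.
  lra.
rewrite Ar -EFinM lee_fin pow32 // expr_div_n.
have dd : 0 < d ^+ 2 by exact: exprn_gt0.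
have id : 0 <= (d ^+ 2)^-1 by rewrite invr_ge0 ltW.
have e1 : u x ^+ 2 / d ^+ 2 * x `^ p = x `^ p * u x ^+ 2 * (d ^+ 2)^-1 by ring.
have e2 : 2 * (Num.sqrt d / d ^+ 2) * r = 2 * r * Num.sqrt d * (d ^+ 2)^-1 by ring.
by rewrite e1 e2; exact: ler_wpM2r.
Qed.
End S8.
Theorem lemma4p1 (R : realType) (p : R) (hp : 0 <= p) :
  exists C : R, forall (a b : R) (u g : R -> R),
    0 <= a -> a < b -> H1_with_deriv a b u g -> u b = 0 ->
    (\int[@lebesgue_measure R]_(x in `[a, b]) (((u x / (b - x)) ^+ 2) * x `^ p)%:E
     <= C%:E * \int[@lebesgue_measure R]_(x in `[a, b]) ((g x ^+ 2) * x `^ p)%:E)%E.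
Proof.
exists 8 => a b u g a0 ab [mg [ig2 uH]] ub.
set mu := @lebesgue_measure R.
set L := b - a.
have L0 : 0 < L by rewrite subr_gt0.
pose gI := patch (fun=> (0:R)) `[a, b] g.
pose K x := 2 * (b - x) `^ (- 3 / 2).
pose W x s := Num.sqrt (b - s + (b - x) ^+ 2 / L).
pose cond (z : (measurableTypeR R * measurableTypeR R)%type) := (a <= z.1) && (z.1 < z.2) && (z.2 < b).
pose F (z : (measurableTypeR R * measurableTypeR R)%type) : \bar R := ((if cond z then K z.1 * W z.1 z.2 * (gI z.2 ^+ 2 * z.2 `^ p) else 0))%:E.
have F0 z : (0 <= F z)%E.
  rewrite /F lee_fin; case: ifP => // _.
  apply: mulr_ge0; [apply: mulr_ge0; [apply: mulr_ge0 => //; exact: powR_ge0|exact: sqrtr_ge0]|].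
  by apply: mulr_ge0; [exact: sqr_ge0|exact: powR_ge0].
have mgI : measurable_fun setT gI by apply/(measurable_restrictT _ _).1.
have mF : measurable_fun (U := EMR R) setT F.
  apply/measurable_EFinP; apply: measurable_fun_ifT.
  - apply: measurable_and; first apply: measurable_and.
    + exact: measurable_fun_ler.
    + exact: measurable_fun_ltr.
    + exact: measurable_fun_ltr.
  - apply: measurable_funM; first apply: measurable_funM.
    + apply: measurable_funM => //.
      exact: (measurableT_comp (measurable_powR _) (measurable_funB (measurable_cst _) measurable_fst)).
    + apply: (measurableT_comp (continuous_measurable_fun (@sqrt_continuous R))).
      apply: measurable_funD; first exact: measurable_funB.
      apply: measurable_funM => //; apply: measurable_funX; exact: measurable_funB.
    + apply: measurable_funM; first by apply: measurable_funX; exact: measurableT_comp.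
      exact: (measurableT_comp (measurable_powR _) measurable_snd).
  - exact: measurable_cst.
have ig : mu.-integrable `[a, b] (EFin \o g).
  apply: (@le_integrable _ _ _ mu `[a, b] (measurable_itv _) (EFin \o g) (fun x => (1 + g x ^+ 2)%:E)).
  - exact/measurable_EFinP.
  - move=> x _; rewrite /= lee_fin.
    have h1 := sqr_ge0 (`|g x| - 1).
    have h2 : `|g x| ^+ 2 = g x ^+ 2 by rewrite real_normK ?num_real.
    have h3 := normr_ge0 (g x).
    rewrite (ger0_norm (addr_ge0 ler01 (sqr_ge0 _))).
    nra.
  - rewrite (_ : (fun x => _) = (EFin \o cst 1) \+ (fun x => (g x ^+ 2)%:E)); last first.
      by apply/funext => x /=; rewrite EFinD.
    apply: integrableD => //.
    apply: measurable_bounded_integrable => //.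
    + have := @lebesgue_measure_itv R `[a, b]%R; rewrite /= => ->.
      by case: ifP => _ //; rewrite -EFinB ltry.
    + exact: bounded_cst.
have step1 : forall x, x \in `[a, b] ->
  (((u x / (b - x)) ^+ 2 * x `^ p)%:E <= \int[mu]_s F (x, s))%E.
  move=> x /set_mem /=; rewrite in_itv /= => /andP[ax]; rewrite le_eqVlt => /predU1P[->|xb].
    by rewrite subrr invr0 mulr0 expr0n mul0r; apply: integral_ge0 => s _; exact: F0.
  apply: le_trans (@step1_lemma R p a b x u g hp a0 ax xb mg ig uH ub) _.
  rewrite -ge0_integralZl_EFin //; first last.
  - by apply: mulr_ge0 => //; exact: powR_ge0.
  - apply/measurable_EFinP; apply: measurable_funM; first apply: measurable_funM.
    + by apply: measurable_funX; apply: measurable_funS mg => //; apply: subset_itv; rewrite bnd_simp ?ax ?lexx.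
    + exact: measurable_funTS (measurable_powR p).
    + apply: measurable_funTS.
      apply: (measurableT_comp (continuous_measurable_fun (@sqrt_continuous R))).
      by apply: measurable_funD => //; exact: measurable_funB.
  - move=> s _; rewrite lee_fin; apply: mulr_ge0; last exact: sqrtr_ge0.
    by apply: mulr_ge0; [exact: sqr_ge0|exact: powR_ge0].
  rewrite integral_mkcond; apply: le_integral_nm => s _.
    apply: erestrict_ge0 => y _; rewrite -EFinM lee_fin; apply: mulr_ge0; first by apply: mulr_ge0 => //; exact: powR_ge0.
    apply: mulr_ge0; last exact: sqrtr_ge0.
    by apply: mulr_ge0; [exact: sqr_ge0|exact: powR_ge0].
  rewrite /patch; case: ifPn => [/set_mem /= sD|_]; last exact: F0.
  move: (sD); rewrite in_itv /= => /andP[xs sb].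
  have c : cond (x, s) by rewrite /cond /= ax xs sb.
  have sab : `[a, b] s by rewrite /= in_itv /= (ltW (le_lt_trans ax xs)) (ltW sb).
  rewrite /F c /gI /patch (mem_set sab) -EFinM lee_fin /K /W le_eqVlt; apply/orP; left; apply/eqP; ring.
have step2 : forall s, (\int[mu]_x F (x, s) <=
   ((fun s => (8 * (g s ^+ 2 * s `^ p))%:E) \_ `[a, b]) s)%E.
  move=> s.
  have [/andP[sa sb]|ns] := boolP ((a < s) && (s < b)); last first.
    rewrite (eq_integral (fun=> 0%E)); last first.
      move=> x _; rewrite /F /cond /=; case: ifPn => // /andP[/andP[ax xs] sb].
      by move: ns; rewrite (le_lt_trans ax xs) sb.
    rewrite integral0 /patch; case: ifP => // _.
    by rewrite lee_fin; apply: mulr_ge0 => //; apply: mulr_ge0; [exact: sqr_ge0|exact: powR_ge0].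
  have sab : `[a, b] s by rewrite /= in_itv /= (ltW sa) (ltW sb).
  rewrite patchE (mem_set sab).
  set Gs := g s ^+ 2 * s `^ p.
  have Gs0 : 0 <= Gs by apply: mulr_ge0; [exact: sqr_ge0|exact: powR_ge0].
  pose Bd x := 2 * Num.sqrt (b - s) * (b - x) `^ (- 3 / 2) + 2 / Num.sqrt L * (b - x) `^ (- 3 / 2 + 1).
  have Bd0 x : 0 <= Bd x.
    apply: addr_ge0; apply: mulr_ge0; try exact: powR_ge0.
      by apply: mulr_ge0 => //; exact: sqrtr_ge0.
    by apply: divr_ge0 => //; exact: sqrtr_ge0.
  apply: (@le_trans _ _ (\int[mu]_x ((fun x => (Gs * Bd x)%:E) \_ `[a, s]) x)%E).
    apply: le_integral_nm => x _; first exact: F0.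
    rewrite /F /patch; case: ifPn => [c|_]; last by case: ifP => // _; rewrite lee_fin; exact: mulr_ge0.
    move: (c); rewrite /cond /= => /andP[/andP[ax xs] _].
    rewrite mem_set /=; last by rewrite in_itv /= ax (ltW xs).
    rewrite /gI /patch (mem_set sab) lee_fin -/Gs (mulrC Gs).
    apply: ler_wpM2r => //.
    apply: KW_bound => //; first by rewrite subr_gt0 (lt_trans xs sb).
    by rewrite subr_ge0 ltW.
  rewrite -integral_mkcond.
  under eq_integral do rewrite EFinM.
  have mpw q : measurable_fun (U := EMR R) `[a, s] (fun x => ((b - x) `^ q)%:E).
    apply/measurable_EFinP; apply: measurable_funTS.
    rewrite (_ : (fun x => (b - x) `^ q) = (@powR R ^~ q) \o (fun x => b - x)) //.
    apply: measurableT_comp; first exact: measurable_powR.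
    exact: measurable_funB.
  rewrite ge0_integralZl_EFin //; last first.
    apply/measurable_EFinP; apply: measurable_funD; apply: measurable_funM => //;
      by apply/measurable_EFinP; exact: mpw.
    by move=> x _; rewrite lee_fin.
  have q1 : (- 3 / 2 + 1 : R) != 0 by apply/eqP; lra.
  have q2 : (- 3 / 2 + 1 + 1 : R) != 0 by apply/eqP; lra.
  have IB : (\int[mu]_(x in `[a, s]) (Bd x)%:E =
     (2 * Num.sqrt (b - s) * (((b - a) `^ (- 3 / 2 + 1) - (b - s) `^ (- 3 / 2 + 1)) / (- 3 / 2 + 1)) +
      2 / Num.sqrt L * (((b - a) `^ (- 3 / 2 + 1 + 1) - (b - s) `^ (- 3 / 2 + 1 + 1)) / (- 3 / 2 + 1 + 1)))%:E)%E.
    rewrite /Bd; under eq_integral do rewrite EFinD.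
    rewrite ge0_integralD //; first last.
    - by apply/measurable_EFinP; apply: measurable_funM => //; apply/measurable_EFinP; exact: mpw.
    - move=> x _; rewrite lee_fin; apply: mulr_ge0; last exact: powR_ge0.
      by apply: divr_ge0 => //; exact: sqrtr_ge0.
    - by apply/measurable_EFinP; apply: measurable_funM => //; apply/measurable_EFinP; exact: mpw.
    - move=> x _; rewrite lee_fin; apply: mulr_ge0; last exact: powR_ge0.
      by apply: mulr_ge0 => //; exact: sqrtr_ge0.
    under eq_integral do rewrite EFinM.
    rewrite ge0_integralZl_EFin //; [|by move=> x _; rewrite lee_fin; exact: powR_ge0|exact: mpw].
    under [X in (_ + X)%E]eq_integral do rewrite EFinM.
    rewrite ge0_integralZl_EFin //; [|by move=> x _; rewrite lee_fin; exact: powR_ge0|exact: mpw].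
    rewrite (@int_powR R b _ a s sa sb q1) (@int_powR R b _ a s sa sb q2).
    by rewrite -!EFinM -EFinD.
  rewrite IB -EFinM lee_fin (mulrC 8 Gs); apply: ler_wpM2l => //.
  apply: num8; first by rewrite subr_gt0.
  exact: L0.

have mG : measurable_fun (U := EMR R) `[a, b] (fun x => ((g x ^+ 2) * x `^ p)%:E).
  apply/measurable_EFinP; apply: measurable_funM; first exact: measurable_funX.
  exact: measurable_funTS (measurable_powR p).
apply: (@le_trans _ _ (\int[mu]_(x in `[a, b]) \int[mu]_s F (x, s))%E).
  apply: le_integral_nm => x xab; first by rewrite lee_fin; apply: mulr_ge0; [exact: sqr_ge0|exact: powR_ge0].
  by apply: step1; rewrite inE.
apply: (@le_trans _ _ (\int[mu]_x \int[mu]_s F (x, s))%E).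
  rewrite [X in (X <= _)%E]integral_mkcond.
  apply: le_integral_nm => x _; first by apply: erestrict_ge0 => y _; apply: integral_ge0.
  rewrite /patch; case: ifP => _ //; exact: integral_ge0.
rewrite (fubini_tonelli F mF F0).
apply: (@le_trans _ _ (\int[mu]_s ((fun s => (8 * (g s ^+ 2 * s `^ p))%:E) \_ `[a, b]) s)%E).
  apply: le_integral_nm => s _; first exact: integral_ge0.
  exact: step2.
rewrite -integral_mkcond.
under eq_integral do rewrite EFinM.
rewrite ge0_integralZl_EFin //.
by move=> x _; rewrite lee_fin; apply: mulr_ge0; [exact: sqr_ge0|exact: powR_ge0].
Qed.
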